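(* Let $G$ be a split graph with vertex partition $\{X,Y\}$, where $X=\{v_1,\ldots,v_n\}$ is a maximal clique of $G$ and $Y=V(G)\setminus X$ is a stable set, and write $d_i=|N_G(v_i)\cap Y|$, with $d_1\ge\cdots\ge d_n$ and $n\ge 4$. If $d_1<\lfloor n/2\rfloor$ and $d_2=0$, then $\chi'_{\rm irr}(G)=3$.
   Context: All graphs are finite and simple. A graph is locally irregular if any two adjacent vertices have distinct degrees. A locally irregular decomposition of $G$ is a collection of locally irregular subgraphs whose edge sets partition $E(G)$; for a graph admitting one, $\chi'_{\rm irr}(G)$ is the minimum number of subgraphs in such a decomposition. *)

(* Defs.v *)
From mathcomp Require Import all_boot.
Set Implicit Arguments. Unset Strict Implicit. Unset Printing Implicit Defensive.

Definition simple_graph (T : finType) (e : rel T) : Prop :=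
  (forall x y, e x y = e y x) /\ (forall x, ~~ e x x).

(* An edge k-colouring: a colour for each (ordered) pair, symmetric on edges.
   Colour class i is the spanning subgraph with the edges of colour i;
   the classes partition E(G). *)
Definition edge_colouring (T : finType) (e : rel T) (k : nat)
  (c : T -> T -> 'I_k) : Prop :=
  forall x y, e x y -> c x y = c y x.

Definition cdeg (T : finType) (e : rel T) (k : nat) (c : T -> T -> 'I_k)
  (i : 'I_k) (x : T) : nat :=
  #|[set y | e x y && (c x y == i)]|.

Definition locally_irregular_colouring (T : finType) (e : rel T) (k : nat)
  (c : T -> T -> 'I_k) : Prop :=
  edge_colouring e c /\
  forall x y, e x y -> cdeg e c (c x y) x <> cdeg e c (c x y) y.

(* G admits a locally irregular decomposition into at most k subgraphs *)
Definition li_decomposable (T : finType) (e : rel T) (k : nat) : Prop :=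
  exists c : T -> T -> 'I_k, locally_irregular_colouring e c.

Definition irr_chromatic_index_is (T : finType) (e : rel T) (k : nat) : Prop :=
  li_decomposable e k /\ forall j, j < k -> ~ li_decomposable e j.

Definition clique (T : finType) (e : rel T) (X : {set T}) : Prop :=
  forall x y, x \in X -> y \in X -> x != y -> e x y.

Definition maximal_clique (T : finType) (e : rel T) (X : {set T}) : Prop :=
  clique e X /\ forall y, y \notin X -> ~ (forall x, x \in X -> e y x).

Definition stable (T : finType) (e : rel T) (Y : {set T}) : Prop :=
  forall x y, x \in Y -> y \in Y -> ~~ e x y.

Definition dY (T : finType) (e : rel T) (Y : {set T}) (v : T) : nat :=
  #|[set y in Y | e v y]|.

(* Main.v *)
Require Import Defs.
From mathcomp Require Import all_boot zify.
Set Implicit Arguments. Unset Strict Implicit. Unset Printing Implicit Defensive.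

Lemma card_ord_count n (P : pred nat) : #|[set j : 'I_n | P (val j)]| = count P (iota 0 n).
Proof.
have -> : iota 0 n = index_iota 0 n by rewrite /index_iota subn0.
rewrite -sum1_count big_mkord -sum1_card. apply: eq_bigl => j. by rewrite inE.
Qed.

Lemma count_int a b p n : count (fun j => (a <= j) && (j < b) && (j != p)) (iota 0 n) = minn b n - a - ((a <= p) && (p < minn b n)).
Proof.
elim: n => [|n IH]; first by rewrite /=; lia.
rewrite -addn1 iotaD count_cat IH /=. lia.
Qed.

Lemma count_int2 a b n : count (fun j => (a <= j) && (j < b)) (iota 0 n) = minn b n - a.
Proof.
elim: n => [|n IH]; first by rewrite /=; lia.
rewrite -addn1 iotaD count_cat IH /=. lia.
Qed.

Lemma count_or_disj (P1 P2 : pred nat) s : (forall x, ~~ (P1 x && P2 x)) ->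
  count (fun x => P1 x || P2 x) s = count P1 s + count P2 s.
Proof.
move=> H; elim: s => [|x s IH] //=. rewrite IH. have := H x. lia.
Qed.

Definition rdeg n (col : 'I_n -> 'I_n -> bool) (b : bool) (i : 'I_n) :=
  #|[set j | (j != i) && (col i j == b)]|.

Lemma rdeg_sum n (col : 'I_n -> 'I_n -> bool) i : rdeg col true i + rdeg col false i = n.-1.
Proof.
have <- : #|[set~ i]| = n.-1 by rewrite cardsC1 card_ord.
rewrite /rdeg -(cardsID [set j | col i j] [set~ i]).
congr (_ + _); apply: eq_card => j; rewrite !inE; by case: (col i j); rewrite ?andbT ?andbF.
Qed.

Lemma rdeg_neg n (col : 'I_n -> 'I_n -> bool) b i :
  rdeg (fun i j => ~~ col i j) b i = rdeg col (~~ b) i.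
Proof.
rewrite /rdeg; apply: eq_card => j; rewrite !inE; by case: (col i j); case: b.
Qed.

Lemma norm_imp n (i0 : 'I_n) (col : 'I_n -> 'I_n -> bool) (pr pb : nat)
  (Hi0 : val i0 = 0)
  (Hsym : forall i j, i != j -> col i j = col j i)
  (Hd : pr + pb < n./2)
  (Hirr : forall i j, i != j ->
     rdeg col (col i j) i + (i == i0) * (if col i j then pr else pb) !=
     rdeg col (col i j) j + (j == i0) * (if col i j then pr else pb))
  (Hlt : forall i, i != i0 -> rdeg col true i < n.-1) : False.
Proof.
have Hn : 0 < n by have := ltn_ord i0; lia.
move: Hlt Hd. set m := n.-1 => Hlt Hd.
have Hm : n = m.+1 by rewrite /m prednK.
have F1 i : rdeg col true i + rdeg col false i = m := rdeg_sum col i.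
have F2 i j : i != i0 -> j != i0 -> i != j -> rdeg col true i != rdeg col true j.
  move=> Hi Hj Hij. have := Hirr i j Hij. rewrite (negbTE Hi) (negbTE Hj) !mul0n !addn0.
  have := F1 i; have := F1 j. case: (col i j); lia.
pose f i := insubd i0 (rdeg col true i).
have vf i : i != i0 -> val (f i) = rdeg col true i.
  move=> Hi; rewrite /f val_insubd. have := Hlt i Hi. case: ifP => //; lia.
have cA : #|[set i | i != i0]| = m.
  have -> : [set i | i != i0] = [set j : 'I_n | val j != 0].
    apply/setP => j; by rewrite !inE -(inj_eq val_inj) Hi0.
  rewrite (card_ord_count n (fun j => j != 0)).
  have -> : count (fun j => j != 0) (iota 0 n) = count (fun j => (0 <= j) && (j < n) && (j != 0)) (iota 0 n).
    apply: eq_in_count => x; rewrite mem_iota. lia.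
  rewrite count_int. lia.
have cB : #|[set t : 'I_n | val t < m]| = m.
  rewrite (card_ord_count n (fun j => j < m)).
  have -> : count (fun j => j < m) (iota 0 n) = count (fun j => (0 <= j) && (j < m)) (iota 0 n).
    by apply: eq_count => x.
  rewrite count_int2. lia.
have injA : {in [set i | i != i0] &, injective f}.
  move=> i j; rewrite !inE => Hi Hj Hf.
  have : val (f i) = val (f j) by rewrite Hf.
  rewrite (vf i Hi) (vf j Hj) => E. apply/eqP; apply: contraT => Hne.
  by have := F2 i j Hi Hj Hne; rewrite E eqxx.
have EAB : f @: [set i | i != i0] = [set t : 'I_n | val t < m].
  apply/eqP; rewrite eqEcard (card_in_imset injA) cA cB leqnn andbT.
  apply/subsetP => _ /imsetP [i Hi ->]. rewrite inE in Hi. by rewrite inE vf // Hlt.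
have F3 t : t < m -> exists2 i, i != i0 & rdeg col true i = t.
  move=> Ht. have : insubd i0 t \in [set t : 'I_n | val t < m].
    rewrite inE val_insubd. case: ifP => //; lia.
  rewrite -EAB => /imsetP [i Hi Hfi]. rewrite inE in Hi. exists i => //.
  have : val (insubd i0 t) = val (f i) by rewrite Hfi.
  rewrite vf // val_insubd. case: ifP => //; lia.
have F4 (P : pred nat) : #|[set i | (i != i0) && P (rdeg col true i)]| = count (fun t => (t < m) && P t) (iota 0 n).
  have inj : {in [set i | (i != i0) && P (rdeg col true i)] &, injective f}.
    move=> i j; rewrite !inE => /andP [Hi _] /andP [Hj _]; apply: injA; by rewrite inE.
  rewrite -(card_in_imset inj) -(card_ord_count n (fun t => (t < m) && P t)). apply: eq_card => t; rewrite inE.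
  apply/imsetP/idP.
  - move=> [i]; rewrite inE => /andP [Hi HP] ->. by rewrite vf // Hlt.
  - move=> /andP [Ht HP]. have [i Hi Hri] := F3 t Ht. exists i; first by rewrite inE Hi Hri.
    apply: val_inj. by rewrite vf.
pose Cp i := (forall j, j != i0 -> j != i -> col i j = (m <= rdeg col true i + rdeg col true j))
   /\ col i i0 = (m <= 2 * rdeg col true i).
have C : forall t i, i != i0 -> minn (rdeg col true i) (m - 1 - rdeg col true i) < t -> Cp i.
  elim => [|t IH] i Hi Hlvl; first by rewrite ltn0 in Hlvl.
  have low : forall i', i' != i0 -> rdeg col true i' = t -> 2 * t < m -> Cp i'.
    move=> i' Hi' Hr H2t.
    pose Fs := [set j | (j != i0) && (m - t <= rdeg col true j)].
    pose Ri := [set j | (j != i') && (col i' j == true)].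
    have sub : Fs \subset Ri.
      apply/subsetP => j; rewrite !inE => /andP [Hj Hrj].
      have Hlj := Hlt j Hj.
      have [Cj _] := IH j Hj ltac:(lia).
      have Hji : j != i' by apply/eqP => E; subst j; lia.
      rewrite Hji /= Hsym 1?eq_sym // (Cj i' Hi' ltac:(by rewrite eq_sym)). lia.
    have cF : #|Fs| = t.
      rewrite /Fs (F4 (fun x => m - t <= x)).
      have -> : count (fun x => (x < m) && (m - t <= x)) (iota 0 n) = count (fun j => (m - t <= j) && (j < m)) (iota 0 n).
        apply: eq_count => x /=; lia.
      rewrite count_int2. lia.
    have cR : #|Ri| = t by rewrite -Hr.
    have EFR : Fs = Ri by apply/eqP; rewrite eqEcard sub cF cR leqnn.
    split.
    - move=> j Hj Hji. have : (j \in Ri) = (j \in Fs) by rewrite EFR.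
      rewrite !inE Hji Hj /= eqb_id => ->. lia.
    - have : (i0 \in Ri) = (i0 \in Fs) by rewrite EFR.
      rewrite !inE eqxx /= eq_sym Hi' /= eqb_id => ->. lia.
  case: (ltnP (minn (rdeg col true i) (m - 1 - rdeg col true i)) t) => [Hl | Hge]; first exact: IH.
  have Hli := Hlt i Hi.
  case: (leqP (rdeg col true i) (m - 1 - rdeg col true i)) => Hcase.
    apply: low => //; lia.
  pose Gs := [set j | (j != i0) && (rdeg col true j <= t)].
  pose Bi := [set j | (j != i) && (col i j == false)].
  have sub : Gs \subset Bi.
    apply/subsetP => j; rewrite !inE => /andP [Hj Hrj].
    have Hlj := Hlt j Hj.
    have Hji : j != i by apply/eqP => E; subst j; lia.
    have [Cj _] : Cp j.
      case: (ltnP (rdeg col true j) t) => Hjt.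
        apply: IH => //; lia.
      apply: low => //; lia.
    rewrite Hji /= Hsym 1?eq_sym // (Cj i Hi ltac:(by rewrite eq_sym)). lia.
  have cG : #|Gs| = t.+1.
    rewrite /Gs (F4 (fun x => x <= t)).
    have -> : count (fun x => (x < m) && (x <= t)) (iota 0 n) = count (fun j => (0 <= j) && (j < t.+1)) (iota 0 n).
      apply: eq_count => x /=; lia.
    rewrite count_int2. lia.
  have cBi : #|Bi| = t.+1 by change (rdeg col false i = t.+1); have := F1 i; lia.
  have EGB : Gs = Bi by apply/eqP; rewrite eqEcard sub cG cBi leqnn.
  split.
  - move=> j Hj Hji. have : (j \in Bi) = (j \in Gs) by rewrite EGB.
    rewrite !inE Hji Hj /=. case: (col i j) => /= E; lia.
  - have : (i0 \in Bi) = (i0 \in Gs) by rewrite EGB.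
    rewrite !inE eqxx /= eq_sym Hi /=. case: (col i i0) => //= _; lia.
have Call i : i != i0 -> Cp i.
  move=> Hi; apply: (C n) => //; have := Hlt i Hi; lia.
have rr0 : rdeg col true i0 = count (fun x => (x < m) && (m <= 2 * x)) (iota 0 n).
  rewrite -(F4 (fun x => m <= 2 * x)) /rdeg. apply: eq_card => j; rewrite !inE.
  case: (boolP (j == i0)) => [/eqP -> //|Hj] /=.
  have [_ Cj] := Call j Hj. by rewrite Hsym 1?eq_sym // Cj eqb_id.
have Hk := odd_double_half n.
move: Hd Hk rr0. set k := n./2 => Hd Hk rr0.
case Ho: (odd n) Hk => Hk.
- have rk : rdeg col true i0 = k.
    rewrite rr0.
    have -> : count (fun x => (x < m) && (m <= 2 * x)) (iota 0 n) = count (fun j => (k <= j) && (j < m)) (iota 0 n).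
      apply: eq_count => x /=; lia.
    rewrite count_int2. lia.
  have [i Hi Hri] := F3 (k + pr) ltac:(lia).
  have Hne : i0 != i by rewrite eq_sym.
  have Hc : col i0 i. rewrite Hsym //. have [_ ->] := Call i Hi. lia.
  have := Hirr i0 i Hne. rewrite Hc eqxx (negbTE Hi) /= rk Hri. lia.
- have rk : rdeg col true i0 = k.-1.
    rewrite rr0.
    have -> : count (fun x => (x < m) && (m <= 2 * x)) (iota 0 n) = count (fun j => (k <= j) && (j < m)) (iota 0 n).
      apply: eq_count => x /=; lia.
    rewrite count_int2. lia.
  have [i Hi Hri] := F3 (k.-1 - pb) ltac:(lia).
  have Hne : i0 != i by rewrite eq_sym.
  have Hc : col i0 i = false. rewrite Hsym //. have [_ ->] := Call i Hi. lia.
  have := Hirr i0 i Hne. rewrite Hc eqxx (negbTE Hi) /=.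
  have := F1 i0; have := F1 i. lia.
Qed.

Lemma abs_imp n (i0 : 'I_n) (col : 'I_n -> 'I_n -> bool) (pr pb : nat)
  (Hi0 : val i0 = 0)
  (Hsym : forall i j, i != j -> col i j = col j i)
  (Hd : pr + pb < n./2)
  (Hirr : forall i j, i != j ->
     rdeg col (col i j) i + (i == i0) * (if col i j then pr else pb) !=
     rdeg col (col i j) j + (j == i0) * (if col i j then pr else pb)) : False.
Proof.
have Hn2 : 1 < n by have := leq_half_double n; lia.
case: (boolP [exists i, (i != i0) && (rdeg col true i == n.-1)]).
- move/existsP => [i1 /andP [Hi1 /eqP Hr1]].
  apply: (@norm_imp n i0 (fun i j => ~~ col i j) pb pr Hi0).
  + move=> i j Hij /=; by rewrite Hsym.
  + lia.
  + move=> i j Hij; rewrite !rdeg_neg negbK. have := Hirr i j Hij. by case: (col i j).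
  + move=> i Hi; rewrite rdeg_neg /=.
    have := rdeg_sum col i.
    suff : 0 < rdeg col true i by lia.
    case: (eqVneq i i1) => [-> | Hii1]; first lia.
    have Hc : col i1 i.
      apply: contraT => Hc.
      have : i \in [set j | (j != i1) && (col i1 j == false)] by rewrite inE Hii1 /= (negbTE Hc).
      have := rdeg_sum col i1. rewrite Hr1 => Hs.
      have H0 : #|[set j | (j != i1) && (col i1 j == false)]| = 0 by rewrite /rdeg in Hs; lia.
      by move/cards0_eq : H0 ->; rewrite inE.
    apply/card_gt0P; exists i1. by rewrite inE eq_sym Hii1 /= (Hsym _ _ Hii1) Hc.
- rewrite negb_exists => /forallP H.
  apply: (@norm_imp n i0 col pr pb Hi0 Hsym Hd Hirr).
  move=> i Hi. have := H i. rewrite Hi /= => Hne. have := rdeg_sum col i. lia.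
Qed.

Definition Fc (k p q : nat) : nat :=
  if p == 0 then (if q == 0 then 2 else if k < q then 0 else 2)
  else if q == 0 then (if k < p then 0 else 2)
  else if 2 * k + 1 <= p + q then 0 else 1.

Definition Dc (n k p c0 : nat) : nat :=
  if p == 0 then (if c0 == 0 then n - 1 - k else if c0 == 1 then 0 else k)
  else if c0 == 0 then n + p - 1 - 2 * k else if c0 == 1 then 2 * k - p - (p <= k) else (p <= k).

Lemma Fc_lt k p q : Fc k p q < 3.
Proof. rewrite /Fc; repeat case: ifP => ?; done. Qed.

Lemma Fc_sym k p q : Fc k p q = Fc k q p.
Proof. rewrite /Fc; repeat case: ifP => ?; lia. Qed.

Ltac solveF := move=> q; rewrite mem_iota => ? /=; rewrite /Fc; repeat (case: ifP => ?); lia.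

Lemma Dcount n k p c0 : 2 * k <= n -> n <= 2 * k + 1 -> 2 <= k -> p < n -> c0 < 3 ->
  count (fun q => (q != p) && (Fc k p q == c0)) (iota 0 n) = Dc n k p c0.
Proof.
move=> H1 H2 H3 Hp Hc. rewrite /Dc.
case: (eqVneq p 0) => [Hp0 | Hp0].
- subst p. case: (eqVneq c0 0) => [-> | H0].
    rewrite (eq_in_count (a2 := fun q => (k.+1 <= q) && (q < n) && (q != 0))); last by solveF.
    rewrite count_int. lia.
  case: (eqVneq c0 1) => [-> | H1'].
    rewrite (eq_in_count (a2 := fun q => (1 <= q) && (q < 0) && (q != 0))); last by solveF.
    rewrite count_int. lia.
  rewrite (eq_in_count (a2 := fun q => (1 <= q) && (q < k.+1) && (q != 0))); last by solveF.
  rewrite count_int. lia.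
- case: (eqVneq c0 0) => [-> | H0].
    rewrite (eq_in_count (a2 := fun q => ((0 <= q) && (q < (k < p)) && (q != p)) ||
                                     ((2 * k + 1 - p <= q) && (q < n) && (q != p)))); last by solveF.
    rewrite count_or_disj; last by move=> q /=; lia.
    rewrite !count_int. case: ltnP => ? /=; lia.
  case: (eqVneq c0 1) => [-> | H1'].
    rewrite (eq_in_count (a2 := fun q => (1 <= q) && (q < 2 * k + 1 - p) && (q != p))); last by solveF.
    rewrite count_int. lia.
  rewrite (eq_in_count (a2 := fun q => (0 <= q) && (q < (p <= k)) && (q != p))); last by solveF.
  rewrite count_int. lia.
Qed.

Lemma ord_eq2 j (a b : 'I_j) : j <= 2 -> (a == b) = ((val a == 0) == (val b == 0)).
Proof. move=> Hj; rewrite -(inj_eq val_inj) /=. have := ltn_ord a; have := ltn_ord b. lia. Qed.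

Lemma inord_eq3 a b : a < 3 -> b < 3 -> ((inord a : 'I_3) == inord b) = (a == b).
Proof. move=> Ha Hb; by rewrite -(inj_eq val_inj) /= !inordK. Qed.

Lemma val_inord3 a : a < 3 -> val (inord a : 'I_3) = a.
Proof. exact: inordK. Qed.

Lemma edge_ok n k d p q : 2 * k <= n -> n <= 2 * k + 1 -> 2 <= k -> p < n -> q < n -> p != q ->
  Dc n k p (Fc k p q) + (p == 0) * (Fc k p q == 2) * d !=
  Dc n k q (Fc k p q) + (q == 0) * (Fc k p q == 2) * d.
Proof.
move=> H1 H2 H3 Hp Hq Hpq.
rewrite /Fc /Dc.
case: (boolP (p == 0)) => A; case: (boolP (q == 0)) => B; case: (boolP (k < p)) => C;
case: (boolP (k < q)) => D; case: (boolP (2 * k + 1 <= p + q)) => E;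
rewrite ?A ?B ?C ?D ?E ?(negbTE A) ?(negbTE B) ?(negbTE C) ?(negbTE D) ?(negbTE E) /=; lia.
Qed.

Theorem lemma2p3 (T : finType) (e : rel T) (n : nat) (v : 'I_n -> T)
  (Hg : simple_graph e)
  (Hn : 4 <= n)
  (Hinj : injective v)
  (HX : maximal_clique e [set v i | i : 'I_n])
  (HY : stable e (~: [set v i | i : 'I_n]))
  (Hsort : forall i j : 'I_n, i <= j ->
     dY e (~: [set v i | i : 'I_n]) (v j) <= dY e (~: [set v i | i : 'I_n]) (v i))
  (Hd1 : forall i : 'I_n, val i = 0 -> dY e (~: [set v i | i : 'I_n]) (v i) < n./2)
  (Hd2 : forall i : 'I_n, val i = 1 -> dY e (~: [set v i | i : 'I_n]) (v i) = 0) :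
  irr_chromatic_index_is e 3.
Proof.
move: HX HY Hsort Hd1 Hd2. set X := [set v i | i : 'I_n] => HX HY Hsort Hd1 Hd2.
have Hn0 : 0 < n by lia.
have Hn1 : 1 < n by lia.
pose i0 : 'I_n := Ordinal Hn0.
pose i1 : 'I_n := Ordinal Hn1.
have [Hsymm Hirrf] := Hg.
have [Hcl _] := HX.
have vX i : v i \in X by apply: imset_f.
have E1 i j : e (v i) (v j) = (i != j).
  case: (eqVneq i j) => [-> | H]; first by apply/negbTE/Hirrf.
  apply: Hcl => //. apply/eqP => E. by move/Hinj: E; apply/eqP.
have i0E i : (i == i0) = (val i == 0) by rewrite -(inj_eq val_inj).
have dY0 i : i != i0 -> dY e (~: X) (v i) = 0.
  move=> Hi. have := Hsort i1 i. rewrite (Hd2 i1 erefl) leqn0 => H. apply/eqP; apply: H.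
  rewrite i0E in Hi. by rewrite /= lt0n.
have E2 i y : y \notin X -> e (v i) y -> i = i0.
  move=> Hy He. apply/eqP; apply: contraT => Hi. have := dY0 i Hi. rewrite /dY.
  move/cards0_eq/setP/(_ y). by rewrite !inE Hy He.
have E3 x y : x \notin X -> y \notin X -> e x y = false.
  move=> Hx Hy. apply/negbTE; apply: HY; by rewrite inE.
pose d := dY e (~: X) (v i0).
have Hdlt : d < n./2 by apply: Hd1.
have card_split i (P : pred T) : #|[set y | e (v i) y && P y]| =
    #|[set j : 'I_n | (j != i) && P (v j)]| + #|[set y | (y \notin X) && e (v i) y && P y]|.
  rewrite -(cardsID X [set y | e (v i) y && P y]).
  congr (_ + _).
  - rewrite -(card_imset _ Hinj). apply: eq_card => y. rewrite !inE. apply/andP/imsetP.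
    + move=> [/andP [He HP] /imsetP [j _ Ey]]. subst y. exists j => //. by rewrite inE eq_sym -E1 He HP.
    + move=> [j]; rewrite inE => /andP [Hj HP] ->. by rewrite E1 eq_sym Hj HP vX.
  - apply: eq_card => y; by rewrite !inE andbA.
split.
  have Hkk := odd_double_half n.
  set k := n./2 in Hkk Hdlt.
  have Hk1 : 2 * k <= n by lia.
  have Hk2 : n <= 2 * k + 1 by lia.
  have Hk3 : 2 <= k by lia.
  pose pre x := [pick i | v i == x].
  have preV i : pre (v i) = Some i.
    rewrite /pre; case: pickP => [j /eqP /Hinj -> // | H]. by have := H i; rewrite eqxx.
  have preN y : y \notin X -> pre y = None.
    move=> Hy; rewrite /pre; case: pickP => [j /eqP Hj | //]. by move: Hy; rewrite -Hj vX.
  pose c x y : 'I_3 := match pre x, pre y with Some i, Some j => inord (Fc k i j) | _, _ => inord 2 end.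
  have cv i j : c (v i) (v j) = inord (Fc k i j) by rewrite /c !preV.
  have cN1 y w : y \notin X -> c y w = inord 2 by move=> Hy; rewrite /c preN.
  have cN2 w y : y \notin X -> c w y = inord 2 by move=> Hy; rewrite /c (preN y Hy); case: (pre w).
  have cdegV i (col : 'I_3) : cdeg e c col (v i) =
      count (fun q : nat => (q != val i) && (Fc k (val i) q == val col)) (iota 0 n) + (i == i0) * (val col == 2) * d.
    rewrite /cdeg card_split. congr (_ + _).
    - rewrite -(card_ord_count n (fun q : nat => (q != val i) && (Fc k (val i) q == val col))). apply: eq_card => j.
      rewrite !inE cv -[inord _ == col](inj_eq val_inj) /= inordK ?Fc_lt //.
    - case: (eqVneq i i0) => [-> | Hi].
        rewrite mul1n. case: (eqVneq (val col) 2) => Hc; rewrite ?mul1n ?mul0n.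
          rewrite /d /dY. apply: eq_card => y; rewrite !inE. case: (boolP (y \in X)) => Hy //=.
          by rewrite cN2 // -(inj_eq val_inj) /= inordK // Hc eqxx andbT.
        apply/eqP; rewrite cards_eq0; apply/eqP/setP => y; rewrite !inE.
        case: (boolP (y \in X)) => Hy //=.
        by rewrite cN2 // -(inj_eq val_inj) /= inordK // eq_sym (negbTE Hc) andbF.
      rewrite !mul0n; apply/eqP; rewrite cards_eq0; apply/eqP/setP => y; rewrite !inE.
      apply/negbTE; case: (boolP (y \in X)) => //= Hy; apply/negP => /andP [He _].
      by move: Hi; rewrite (E2 i y Hy He) eqxx.
  have cdegP y (col : 'I_3) : y \notin X -> e (v i0) y -> cdeg e c col y = (val col == 2).
    move=> Hy He.
    have N : forall z, e y z = (z == v i0).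
      move=> z. apply/idP/eqP => [Hz | ->]; last by rewrite Hsymm.
      case: (boolP (z \in X)) => [/imsetP [j _ Ez] | Hz']; last by rewrite E3 in Hz.
      subst z. rewrite Hsymm in Hz. by rewrite (E2 j y Hy Hz).
    rewrite /cdeg. case: (eqVneq (val col) 2) => Hc /=.
      transitivity #|[set v i0]|; last by rewrite cards1.
      apply: eq_card => z; rewrite !inE N cN1 //.
      by rewrite -(inj_eq val_inj) /= inordK // Hc eqxx andbT.
    apply/eqP; rewrite cards_eq0; apply/eqP/setP => z; rewrite !inE cN1 //.
    by rewrite -(inj_eq val_inj) /= inordK // eq_sym (negbTE Hc) andbF.
  have D0 : count (fun q => (q != 0) && (Fc k 0 q == 2)) (iota 0 n) = k.
    by rewrite (Dcount Hk1 Hk2 Hk3 Hn0).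
  exists c. split.
  - move=> x y _; rewrite /c. case: (pre x) => [i|]; case: (pre y) => [j|] //. by rewrite Fc_sym.
  - move=> x y Hxy.
    case: (boolP (x \in X)) => [/imsetP [i _ Ex] | Hx]; case: (boolP (y \in X)) => [/imsetP [j _ Ey] | Hy].
    + subst x y. have Hij : i != j by rewrite -E1.
      have Hij' : val i != val j by [].
      rewrite cv !cdegV !val_inord3 ?Fc_lt //.
      rewrite !(Dcount Hk1 Hk2 Hk3 (ltn_ord _) (Fc_lt _ _ _)) !i0E.
      apply/eqP. exact: edge_ok.
    + subst x. have Ei := E2 i y Hy Hxy. subst i.
      rewrite cN2 // cdegV cdegP // !val_inord3 // eqxx /= D0. lia.
    + subst y. rewrite Hsymm in Hxy. have Ej := E2 j x Hx Hxy. subst j.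
      rewrite cN1 // cdegV cdegP // !val_inord3 // eqxx /= D0. lia.
    + by rewrite E3 in Hxy.
move=> j Hj [c [Hec Hli]].
case: j Hj c Hec Hli => [|j] Hj c Hec Hli; first by case: (c (v i0) (v i0)).
have Hj2 : j.+1 <= 2 by lia.
pose colb x y := val (c x y) == 0.
have cdegE x y w : cdeg e c (c x y) w = #|[set z | e w z && (colb w z == colb x y)]|.
  rewrite /cdeg; apply: eq_card => z; by rewrite !inE ord_eq2.
pose col i i' := colb (v i) (v i').
pose pr := #|[set y | (y \notin X) && e (v i0) y && (colb (v i0) y == true)]|.
pose pb := #|[set y | (y \notin X) && e (v i0) y && (colb (v i0) y == false)]|.
have Hprb : pr + pb = d.
  rewrite /d /dY -(cardsID [set y | colb (v i0) y] [set y in ~: X | e (v i0) y]).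
  congr (_ + _); apply: eq_card => y; rewrite !inE; by case: (colb (v i0) y); rewrite ?andbT ?andbF.
have extra i b : #|[set y | (y \notin X) && e (v i) y && (colb (v i) y == b)]| =
    (i == i0) * (if b then pr else pb).
  case: (eqVneq i i0) => [-> | Hi]; first by case: b; rewrite mul1n.
  rewrite mul0n; apply/eqP; rewrite cards_eq0; apply/eqP/setP => y; rewrite !inE.
  apply/negbTE; case: (boolP (y \in X)) => //= Hy; apply/negP => /andP [He _].
  by move: Hi; rewrite (E2 i y Hy He) eqxx.
have Hsc : forall i i', i != i' -> col i i' = col i' i.
  move=> i i' H; rewrite /col /colb (Hec (v i) (v i')) //; by rewrite E1.
have Hdd : pr + pb < n./2 by rewrite Hprb.
apply: (@abs_imp n i0 col pr pb erefl Hsc Hdd).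
move=> i i' H. have He : e (v i) (v i') by rewrite E1.
  have := Hli _ _ He. rewrite !cdegE !card_split !extra. move=> Hne; apply/eqP; exact: Hne.
Qed.
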